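(* For all $k,r\ge 0$, every graph in $M^k_r$ is connected and has diameter at most $2^r$.
   Context: Colors are red, blue, green. A $k$-precolored graph is a finite graph together with an assignment of colors to at most $k$ of its vertices. The game $\mathcal{G}^k_r(H)$ on a $k$-precolored graph $H$ starts from the given precoloring and lasts $r$ rounds; in each round Spoiler may erase the colors of some currently colored vertices and then selects a vertex, which Duplicator colors with one of the three colors; after each round at most $k$ vertices may be colored. Duplicator wins if the initial partial coloring and the partial coloring after each round are proper; otherwise Spoiler wins. A subgraph $H'$ of a $k$-precolored graph $H$ is a subgraph of the underlying graph in which every vertex colored in $H'$ has the same color in $H$ (vertices colored in $H$ may be uncolored in $H'$); it is proper if $H'\ne H$ as precolored graphs. $M^k_r$ is the family of all $k$-precolored graphs $H$ such that Spoiler has a winning strategy in $\mathcal{G}^k_r(H)$ while Duplicator has a winning strategy in $\mathcal{G}^k_r(K)$ for every proper subgraph $K$ of $H$. *)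

(* Defs.v *)
From mathcomp Require Import all_boot.
Set Implicit Arguments. Unset Strict Implicit. Unset Printing Implicit Defensive.

Definition color := 'I_3.

(* A (partially) precolored finite simple graph whose vertex set is a subset
   [pv] of an ambient finite type [T]. Edges [pe], partial coloring [pc]. *)
Record pgraph (T : finType) := PGraph {
  pv : {set T};
  pe : rel T;
  pc : {ffun T -> option color}
}.

Definition colored (T : finType) (p : {ffun T -> option color}) : {set T} :=
  [set x | p x != None].

Definition wf_pgraph (T : finType) (G : pgraph T) : Prop :=
  (forall x y, pe G x y = pe G y x) /\
  (forall x, ~~ pe G x x) /\
  (forall x y, pe G x y -> x \in pv G /\ y \in pv G) /\
  (forall x, pc G x != None -> x \in pv G).

Definition kprecolored (k : nat) (T : finType) (G : pgraph T) : Prop :=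
  wf_pgraph G /\ #|colored (pc G)| <= k.

Definition subgraph (T : finType) (K H : pgraph T) : Prop :=
  pv K \subset pv H /\
  (forall x y, pe K x y -> pe H x y) /\
  (forall x c, pc K x = Some c -> pc H x = Some c).

Definition same_pgraph (T : finType) (K H : pgraph T) : Prop :=
  pv K = pv H /\ (forall x y, pe K x y = pe H x y) /\ pc K = pc H.

Definition proper_subgraph (T : finType) (K H : pgraph T) : Prop :=
  wf_pgraph K /\ subgraph K H /\ ~ same_pgraph K H.

Definition proper_coloring (T : finType) (e : rel T) (p : {ffun T -> option color}) : Prop :=
  forall x y a b, e x y -> p x = Some a -> p y = Some b -> a <> b.

(* Duplicator colors v with c *)
Definition upd (T : finType) (p : {ffun T -> option color}) (v : T) (c : color)
  : {ffun T -> option color} :=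
  [ffun x => if x == v then Some c else p x].

(* Spoiler's legal move from p: erase some colors (giving p'), then select
   a vertex v of the graph, such that after the round at most k vertices are
   colored. *)
Definition legal_move (k : nat) (T : finType) (G : pgraph T)
  (p p' : {ffun T -> option color}) (v : T) : Prop :=
  (forall x, p' x = p x \/ p' x = None) /\ v \in pv G /\
  (forall c, #|colored (upd p' v c)| <= k).

Fixpoint spoiler_wins (k : nat) (T : finType) (G : pgraph T) (r : nat)
  (p : {ffun T -> option color}) : Prop :=
  ~ proper_coloring (pe G) p \/
  match r with
  | 0 => False
  | r'.+1 => exists p' v, legal_move k G p p' v /\
               forall c, spoiler_wins k G r' (upd p' v c)
  end.

Fixpoint duplicator_wins (k : nat) (T : finType) (G : pgraph T) (r : nat)
  (p : {ffun T -> option color}) : Prop :=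
  proper_coloring (pe G) p /\
  match r with
  | 0 => True
  | r'.+1 => forall p' v, legal_move k G p p' v ->
               exists c, duplicator_wins k G r' (upd p' v c)
  end.

Definition in_M (k r : nat) (T : finType) (H : pgraph T) : Prop :=
  kprecolored k H /\ spoiler_wins k H r (pc H) /\
  (forall K : pgraph T, proper_subgraph K H -> duplicator_wins k K r (pc K)).

Definition pconnected (T : finType) (G : pgraph T) : Prop :=
  forall x y, x \in pv G -> y \in pv G -> connect (pe G) x y.

Definition diameter_le (T : finType) (G : pgraph T) (d : nat) : Prop :=
  forall x y, x \in pv G -> y \in pv G ->
    exists s : seq T, [/\ path (pe G) x s, last x s = y & size s <= d].

(* Main.v *)
Require Import Defs.
From Stdlib Require Import Classical ClassicalEpsilon.
From mathcomp Require Import all_boot.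
From mathcomp Require Import zify.

Set Implicit Arguments. Unset Strict Implicit. Unset Printing Implicit Defensive.

Lemma spoil_mono_r k (T : finType) (G : pgraph T) r :
  forall p, spoiler_wins k G r p -> spoiler_wins k G r.+1 p.
Proof.
elim: r => [|r IH] p /=.
  by case => // H; left.
case => [H|[p' [v [Hl Hw]]]]; first by left.
right; exists p', v; split => // c; exact: IH.
Qed.

Lemma spoil_mono_sub k (T : finType) (K G : pgraph T) r :
  pv K \subset pv G -> (forall x y, pe K x y -> pe G x y) ->
  forall q p : {ffun T -> option color}, (forall x c, q x = Some c -> p x = Some c) ->
  spoiler_wins k K r q -> spoiler_wins k G r p.
Proof.
move=> sV sE; elim: r => [|r IH] q p sqp /=.
  case => // Hn; left => Hp; apply: Hn => x y a b e qx qy.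
  by apply: (Hp x y a b (sE _ _ e) (sqp _ _ qx) (sqp _ _ qy)).
case => [Hn|[q' [v [[H1 [H2 H3]] Hw]]]].
  left => Hp; apply: Hn => x y a b e qx qy.
  by apply: (Hp x y a b (sE _ _ e) (sqp _ _ qx) (sqp _ _ qy)).
right; exists q', v; split.
  split; last split => //; last exact: (subsetP sV).
  move=> x; case: (H1 x) => E; last by right.
  rewrite E; case Eq: (q x) => [c|]; first by left; rewrite (sqp _ _ Eq).
  by right.
move=> c; exact: (IH _ _ (fun _ _ h => h) (Hw c)).
Qed.

Lemma not_both k (T : finType) (G : pgraph T) r :
  forall p, spoiler_wins k G r p -> duplicator_wins k G r p -> False.
Proof.
elim: r => [|r IH] p /=.
  by case=> // Hn [Hp _]; apply: Hn.
case=> [Hn [Hp _]|[p' [v [Hl Hw]]] [_ Hd]]; first exact: Hn.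
have [c Hc] := Hd _ _ Hl.
exact: (IH _ (Hw c) Hc).
Qed.

Lemma spoil_improper k (T : finType) (G : pgraph T) r p :
  ~ proper_coloring (pe G) p -> spoiler_wins k G r p.
Proof. by case: r => [|r] h; left. Qed.

Definition Qres k (T : finType) (G : pgraph T) r p (K : pgraph T) :=
  [/\ wf_pgraph K, pv K \subset pv G, (forall x y, pe K x y -> pe G x y),
      (forall x c, pc K x = Some c -> p x = Some c)
      & (spoiler_wins k K r (pc K) /\ diameter_le K (2 ^ r))].

Lemma improper_case k (T : finType) (G : pgraph T) r p :
  wf_pgraph G -> ~ proper_coloring (pe G) p -> exists K, Qres k G r p K.
Proof.
move=> [Gsym [Girr [Gend Gcol]]] Himp.
apply: NNPP => Hn; apply: Himp => x y a b e px py eab; subst b.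
apply: Hn.
have xy : x != y.
  by apply/eqP => E; subst y; move: (Girr x); rewrite e.
pose K := PGraph [set x; y]
  (fun u w => ((u == x) && (w == y)) || ((u == y) && (w == x)))
  [ffun z => if (z == x) || (z == y) then p z else None].
exists K; split; last split.
- split; first by move=> u w /=; rewrite orbC; congr (_ || _); rewrite andbC.
  split; first by move=> u /=; apply/negP => /orP [] /andP [/eqP -> /eqP E];
    move: xy; rewrite E eqxx.
  split.
    by move=> u w /= /orP [] /andP [/eqP -> /eqP ->]; rewrite !inE !eqxx ?orbT.
  by move=> u /=; rewrite ffunE !inE; case: (u == x) => //; case: (u == y).
- by apply/subsetP => u; rewrite !inE => /orP [] /eqP ->; have [] := Gend _ _ e.
- by move=> u w /= /orP [] /andP [/eqP -> /eqP ->] //; rewrite Gsym.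
- by move=> u c /=; rewrite ffunE; case: ((u == x) || (u == y)).
- apply: spoil_improper => Hp; apply: (Hp x y a a) => //=.
  + by rewrite !eqxx.
  + by rewrite ffunE eqxx.
  + by rewrite ffunE eqxx orbT.
- move=> u w; rewrite /= !inE => Hu Hw.
  have h1 : 0 < 2 ^ r by rewrite expn_gt0.
  case/orP: Hu => /eqP ->; case/orP: Hw => /eqP ->.
  + by exists [::].
  + by exists [:: y]; split => //=; rewrite !eqxx.
  + by exists [:: x]; split => //=; rewrite !eqxx ?orbT.
  + by exists [::].
Qed.

Lemma Qlem k (T : finType) (G : pgraph T) r :
  wf_pgraph G -> forall p, spoiler_wins k G r p -> exists K, Qres k G r p K.
Proof.
move=> wfG; elim: r => [|r IH] p /=.
  by case => // Hn; apply: improper_case.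
case => [Hn|[p' [v [[H1 [H2 H3]] Hw]]]]; first exact: improper_case.
have Kc := fun c => constructive_indefinite_description _ (IH _ (Hw c)).
pose K := fun c => proj1_sig (Kc c).
have KP : forall c, Qres k G r (upd p' v c) (K c) := fun c => proj2_sig (Kc c).
case: (boolP [exists c, v \notin pv (K c)]).
  case/existsP => c vK.
  have [wK sV sE sC [Ws Wd]] := KP c.
  exists (K c); split => //; last split.
  - move=> x c' Hx; have xK : x \in pv (K c).
      by case: wK => _ [_ [_ h]]; apply: h; rewrite Hx.
    have := sC _ _ Hx; rewrite ffunE.
    case: eqP => [E|_]; first by subst x; move: vK; rewrite xK.
    by move=> E; case: (H1 x) => E'; [rewrite -E' | rewrite E' in E].
  - exact: spoil_mono_r.
  - move=> x y xK yK; have [s [s1 s2 s3]] := Wd x y xK yK.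
    exists s; split => //; rewrite expnS; lia.
rewrite negb_exists => /forallP vK.
have vin : forall c, v \in pv (K c) by move=> c; have := vK c; rewrite negbK.
pose V := \bigcup_(c : color) pv (K c).
pose U := PGraph V (fun x y => [exists c, pe (K c) x y])
  [ffun x => if x \in V then p x else None].
have wfK : forall c, wf_pgraph (K c) by move=> c; case: (KP c).
exists U; split; last split.
- split.
    by move=> x y /=; apply/existsP/existsP => [] [c h]; exists c;
      case: (wfK c) => s _; rewrite s.
  split.
    by move=> x /=; rewrite negb_exists; apply/forallP => c; case: (wfK c) => _ [h _].
  split.
    move=> x y /= /existsP [c h]; case: (wfK c) => _ [_ [h' _]].
    by case: (h' _ _ h) => a b; split; apply/bigcupP; exists c.
  by move=> x /=; rewrite ffunE; case: (x \in V).
- by apply/bigcupsP => c _; case: (KP c).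
- by move=> x y /= /existsP [c h]; case: (KP c) => _ _ h' _ _; apply: h'.
- by move=> x c /=; rewrite ffunE; case: (x \in V).
- right.
  exists [ffun x => if x \in V then p' x else None], v; split.
    split.
      move=> x /=; rewrite !ffunE. case: (x \in V); last by right.
      exact: H1.
    split; first by apply/bigcupP; exists ord0.
    move=> c; apply: leq_trans (H3 c); apply: subset_leq_card.
    apply/subsetP => x; rewrite !inE !ffunE; case: (x == v) => //.
    by case: (x \in V).
  move=> c; have [wK sV sE sC [Ws Wd]] := KP c.
  apply: (spoil_mono_sub _ _ _ Ws).
  + by apply: (bigcup_sup c).
  + by move=> x y h; apply/existsP; exists c.
  + move=> x c' Hx; have xK : x \in pv (K c).
      by case: wK => _ [_ [_ h]]; apply: h; rewrite Hx.
    have xV : x \in V by apply/bigcupP; exists c.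
    have := sC _ _ Hx; rewrite !ffunE xV.
    by case: (x == v).
- move=> x y /bigcupP [a _ xa] /bigcupP [b _ yb].
  have [_ _ _ _ [_ Da]] := KP a; have [_ _ _ _ [_ Db]] := KP b.
  have [s1 [p1 l1 z1]] := Da x v xa (vin a).
  have [s2 [p2 l2 z2]] := Db v y (vin b) yb.
  exists (s1 ++ s2); split.
  + rewrite cat_path l1; apply/andP; split.
      by apply: sub_path p1 => u w h; apply/existsP; exists a.
    by apply: sub_path p2 => u w h; apply/existsP; exists b.
  + by rewrite last_cat l1.
  + rewrite size_cat expnS; lia.
Qed.

Theorem lemma6 (k r : nat) (T : finType) (H : pgraph T) :
  in_M k r H -> pconnected H /\ diameter_le H (2 ^ r).
Proof.
move=> [[wfH _] [Hs Hmin]].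
have [K [wK sV sE sC [Ws Wd]]] := Qlem wfH Hs.
have same : same_pgraph K H.
  apply: NNPP => ns.
  have Hd := Hmin K (conj wK (conj (conj sV (conj sE sC)) ns)).
  exact: (not_both Ws Hd).
case: same => eV [eE _].
have D : diameter_le H (2 ^ r).
  move=> x y; rewrite -eV => xK yK; have [s [s1 s2 s3]] := Wd x y xK yK.
  exists s; split => //; by rewrite (eq_path (e' := pe H)) in s1.
split => // x y xH yH; have [s [s1 s2 _]] := D x y xH yH.
by apply/connectP; exists s.
Qed.
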